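(* Let $n\ge2$, $\beta\in\mathbb{R}$, and let $\omega_1,\dots,\omega_{n-1}$ be real numbers such that all sums $\sum_{i=m}^p\omega_i$ ($1\le m\le p\le n-1$) are nonzero. Then $$\int_0^\beta d\beta_1\int_0^{\beta_1}d\beta_2\cdots\int_0^{\beta_{n-1}}d\beta_n\,\exp\Big(-\sum_{j=1}^{n-1}\beta_j\omega_j+\beta_n\sum_{j=1}^{n-1}\omega_j\Big)$$ $$=\frac{1}{\prod_{k=1}^{n-1}\sum_{j=1}^k\omega_j}\Big(\beta-\sum_{k=1}^{n-1}\frac{1}{\sum_{j=1}^k\omega_j}\Big)-\sum_{p=1}^{n-1}\frac{(-1)^p\,e^{-\beta\sum_{i=1}^p\omega_i}}{\Big(\prod_{m=2}^p\sum_{i=m}^p\omega_i\Big)\Big(\sum_{r=1}^p\omega_r\Big)^2\Big(\prod_{k=p+1}^{n-1}\sum_{j=p+1}^k\omega_j\Big)},$$ where empty products equal $1$. *)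

(* Defs.v *)
From Stdlib Require Import Reals Lra Lia List.
From Coquelicot Require Import Coquelicot.
Open Scope R_scope.

(* sumR m p f = f m + f (m+1) + ... + f p ;  empty (= 0) if p < m. *)
Definition sumR (m p : nat) (f : nat -> R) : R :=
  fold_right Rplus 0 (map f (seq m (S p - m))).

(* prodR m p f = f m * ... * f p ;  empty (= 1) if p < m. *)
Definition prodR (m p : nat) (f : nat -> R) : R :=
  fold_right Rmult 1 (map f (seq m (S p - m))).

(* Nested (ordered) iterated integral.
   nest k F b acc = \int_0^b dx_1 \int_0^{x_1} dx_2 ... \int_0^{x_{k-1}} dx_k
                       F (acc ++ [x_1; ...; x_k]). *)
Fixpoint nest (k : nat) (F : list R -> R) (b : R) (acc : list R) : R :=
  match k with
  | O => F acc
  | S k' => RInt (fun x => nest k' F x (acc ++ x :: nil)) 0 b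
  end.

(* beta_j (1-based) read from the list of integration variables *)
Definition bvar (bs : list R) (j : nat) : R := nth (j - 1) bs 0.

(* Main.v *)
Require Import Defs.
From Stdlib Require Import Reals Lra Lia List.
From Coquelicot Require Import Coquelicot.
Open Scope R_scope.


Section Gen.
Variable op : R -> R -> R.
Variable e : R.
Hypothesis Hassoc : forall x y z, op x (op y z) = op (op x y) z.
Hypothesis Hl : forall x, op e x = x.
Hypothesis Hr : forall x, op x e = x.

Lemma fr_app_gen (l1 : list R) z : fold_right op z l1 = op (fold_right op e l1) z.
Proof. induction l1; simpl. now rewrite Hl. rewrite IHl1, Hassoc. reflexivity. Qed.

Lemma G_split (f : nat -> R) a b c : (a <= S b)%nat -> (b <= c)%nat ->
  fold_right op e (map f (seq a (S c - a))) =
  op (fold_right op e (map f (seq a (S b - a)))) (fold_right op e (map f (seq (S b) (S c - S b)))).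
Proof.
  intros H1 H2. replace (S c - a)%nat with ((S b - a) + (S c - S b))%nat by lia.
  rewrite seq_app, map_app, fold_right_app.
  replace (a + (S b - a))%nat with (S b) by lia. apply fr_app_gen.
Qed.

Lemma G_one (f : nat -> R) a : fold_right op e (map f (seq a (S a - a))) = f a.
Proof. replace (S a - a)%nat with 1%nat by lia. simpl. apply Hr. Qed.

Lemma G_empty (f : nat -> R) a b : (b < a)%nat -> fold_right op e (map f (seq a (S b - a))) = e.
Proof. intros H. replace (S b - a)%nat with 0%nat by lia. reflexivity. Qed.

Lemma G_ext (f g : nat -> R) a b : (forall j, (a <= j <= b)%nat -> f j = g j) ->
  fold_right op e (map f (seq a (S b - a))) = fold_right op e (map g (seq a (S b - a))).
Proof.
  intros H. f_equal. apply map_ext_in. intros j Hj. apply in_seq in Hj. apply H. lia.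
Qed.

Lemma seq_shift_gen d len a : seq (a + d) len = map (fun j => (j + d)%nat) (seq a len).
Proof. revert a; induction len; intros a; simpl. reflexivity. f_equal. rewrite <- IHlen. f_equal. Qed.

Lemma G_shift (f : nat -> R) a b d :
  fold_right op e (map f (seq (a + d) (S (b + d) - (a + d)))) =
  fold_right op e (map (fun j => f (j + d)%nat) (seq a (S b - a))).
Proof.
  replace (S (b + d) - (a + d))%nat with (S b - a)%nat by lia.
  rewrite seq_shift_gen, map_map. reflexivity.
Qed.
End Gen.

Lemma sumR_split f a b c : (a <= S b)%nat -> (b <= c)%nat -> sumR a c f = sumR a b f + sumR (S b) c f.
Proof. intros; unfold sumR; apply G_split; intros; ring || lia. Qed.
Lemma prodR_split f a b c : (a <= S b)%nat -> (b <= c)%nat -> prodR a c f = prodR a b f * prodR (S b) c f.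
Proof. intros; unfold prodR; apply G_split; intros; ring || lia. Qed.
Lemma sumR_one f a : sumR a a f = f a.
Proof. unfold sumR; apply G_one; intros; ring. Qed.
Lemma prodR_one f a : prodR a a f = f a.
Proof. unfold prodR; apply G_one; intros; ring. Qed.
Lemma sumR_empty f a b : (b < a)%nat -> sumR a b f = 0.
Proof. intros; unfold sumR; apply G_empty; auto. Qed.
Lemma prodR_empty f a b : (b < a)%nat -> prodR a b f = 1.
Proof. intros; unfold prodR; apply G_empty; auto. Qed.
Lemma sumR_ext f g a b : (forall j, (a <= j <= b)%nat -> f j = g j) -> sumR a b f = sumR a b g.
Proof. intros; unfold sumR; apply G_ext; auto. Qed.
Lemma prodR_ext f g a b : (forall j, (a <= j <= b)%nat -> f j = g j) -> prodR a b f = prodR a b g.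
Proof. intros; unfold prodR; apply G_ext; auto. Qed.
Lemma sumR_shift f a b d : sumR (a + d) (b + d) f = sumR a b (fun j => f (j + d)%nat).
Proof. unfold sumR; apply G_shift. Qed.
Lemma prodR_shift f a b d : prodR (a + d) (b + d) f = prodR a b (fun j => f (j + d)%nat).
Proof. unfold prodR; apply G_shift. Qed.

Lemma sumR_last f a b : (a <= S b)%nat -> sumR a (S b) f = sumR a b f + f (S b).
Proof. intros; rewrite (sumR_split f a b (S b)), sumR_one; auto. Qed.
Lemma prodR_last f a b : (a <= S b)%nat -> prodR a (S b) f = prodR a b f * f (S b).
Proof. intros; rewrite (prodR_split f a b (S b)), prodR_one; auto. Qed.
Lemma sumR_first f a b : (a <= b)%nat -> sumR a b f = f a + sumR (S a) b f.
Proof. intros; rewrite (sumR_split f a a b), sumR_one; auto. Qed.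
Lemma prodR_first f a b : (a <= b)%nat -> prodR a b f = f a * prodR (S a) b f.
Proof. intros; rewrite (prodR_split f a a b), prodR_one; auto. Qed.

Lemma sumR_plus f g a b : sumR a b (fun j => f j + g j) = sumR a b f + sumR a b g.
Proof. unfold sumR. induction (seq a (S b - a)); simpl; [ring| rewrite IHl; ring]. Qed.
Lemma sumR_scal c f a b : sumR a b (fun j => c * f j) = c * sumR a b f.
Proof. unfold sumR. induction (seq a (S b - a)); simpl; [ring| rewrite IHl; ring]. Qed.
Lemma fr_opp (l : list nat) f : fold_right Rmult 1 (map (fun j => - f j) l) = (-1) ^ (length l) * fold_right Rmult 1 (map f l).
Proof. induction l; simpl. ring. rewrite IHl. ring. Qed.
Lemma prodR_opp f a b : prodR a b (fun j => - f j) = (-1) ^ (S b - a) * prodR a b f.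
Proof. unfold prodR. rewrite fr_opp, length_seq. reflexivity. Qed.
Lemma prodR_nz f a b : (forall j, (a <= j <= b)%nat -> f j <> 0) -> prodR a b f <> 0.
Proof. unfold prodR. intros H.
  assert (H' : forall j, In j (seq a (S b - a)) -> f j <> 0).
  { intros j Hj; apply in_seq in Hj; apply H; lia. }
  induction (seq a (S b - a)); simpl. lra. apply Rmult_integral_contrapositive; split.
  apply H'; now left. apply IHl; intros; apply H'; now right. Qed.


Definition Pex (x : nat -> R) N m := prodR 0 N (fun l => if Nat.eq_dec l m then 1 else x m - x l).
Definition injN (x : nat -> R) N := forall a b, (a <= N)%nat -> (b <= N)%nat -> a <> b -> x a <> x b.

Lemma Pex_nz x N m : injN x N -> (m <= N)%nat -> Pex x N m <> 0.
Proof. intros H Hm. apply prodR_nz. intros j Hj. destruct (Nat.eq_dec j m). lra.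
  intro E. apply (H m j); try lia; lra. Qed.

Lemma Pex_last_lt x N m : (m <= N)%nat -> Pex x (S N) m = Pex x N m * (x m - x (S N)).
Proof. intros. unfold Pex. rewrite prodR_last by lia. destruct (Nat.eq_dec (S N) m). lia. reflexivity. Qed.

Lemma Pex_last_eq x N : Pex x (S N) (S N) = prodR 0 N (fun l => x (S N) - x l).
Proof. unfold Pex. rewrite prodR_last by lia. destruct (Nat.eq_dec (S N) (S N)); [|lia].
  rewrite Rmult_1_r. apply prodR_ext. intros j Hj. destruct (Nat.eq_dec j (S N)). lia. reflexivity. Qed.

Lemma Q_nz x N y : (forall a, (a <= N)%nat -> y <> x a) -> prodR 0 N (fun l => y - x l) <> 0.
Proof. intros H. apply prodR_nz. intros j Hj. specialize (H j ltac:(lia)). lra. Qed.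

Lemma injN_S x N : injN x (S N) -> injN x N.
Proof. intros H a b ? ? ?; apply H; auto; lia. Qed.

Lemma PF N : forall x y, injN x N -> (forall a, (a <= N)%nat -> y <> x a) ->
  sumR 0 N (fun m => / ((y - x m) * Pex x N m)) = / prodR 0 N (fun l => y - x l).
Proof.
  induction N; intros x y Hx Hy.
  - rewrite sumR_one, prodR_one. unfold Pex. rewrite prodR_one. simpl.
    specialize (Hy 0%nat ltac:(lia)). field. lra.
  - rewrite sumR_last by lia. rewrite prodR_last by lia. rewrite Pex_last_eq.
    assert (HxN := injN_S _ _ Hx).
    assert (Hyx : y <> x (S N)) by (apply Hy; lia).
    assert (Hx' : forall a, (a <= N)%nat -> x (S N) <> x a).
    { intros a Ha E. apply (Hx (S N) a); auto; lia. }
    assert (Hy' : forall a, (a <= N)%nat -> y <> x a) by (intros; apply Hy; lia).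
    rewrite (sumR_ext _ (fun m => / (y - x (S N)) * ((-1) * / ((x (S N) - x m) * Pex x N m) + / ((y - x m) * Pex x N m)))).
    2:{ intros m Hm. rewrite Pex_last_lt by lia.
        assert (Pex x N m <> 0) by (apply Pex_nz; auto; lia).
        specialize (Hx' m ltac:(lia)). specialize (Hy' m ltac:(lia)).
        field. repeat split; auto; lra. }
    rewrite sumR_scal, sumR_plus, sumR_scal, IHN, IHN by auto.
    assert (prodR 0 N (fun l => y - x l) <> 0) by (apply Q_nz; auto).
    assert (prodR 0 N (fun l => x (S N) - x l) <> 0) by (apply Q_nz; auto).
    field. repeat split; auto; lra.
Qed.

Lemma PF2 N : forall x y, injN x N -> (forall a, (a <= N)%nat -> y <> x a) ->
  sumR 0 N (fun m => / ((y - x m) ^ 2 * Pex x N m)) =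
  sumR 0 N (fun l => / (y - x l)) * / prodR 0 N (fun l => y - x l).
Proof.
  induction N; intros x y Hx Hy.
  - rewrite !sumR_one, prodR_one. unfold Pex. rewrite prodR_one. simpl.
    specialize (Hy 0%nat ltac:(lia)). field. lra.
  - rewrite !sumR_last by lia. rewrite prodR_last by lia. rewrite Pex_last_eq.
    assert (HxN := injN_S _ _ Hx).
    assert (Hyx : y <> x (S N)) by (apply Hy; lia).
    assert (Hx' : forall a, (a <= N)%nat -> x (S N) <> x a).
    { intros a Ha E. apply (Hx (S N) a); auto; lia. }
    assert (Hy' : forall a, (a <= N)%nat -> y <> x a) by (intros; apply Hy; lia).
    rewrite (sumR_ext _ (fun m => / (y - x (S N)) * (/ (y - x (S N)) * ((-1) * / ((x (S N) - x m) * Pex x N m) + / ((y - x m) * Pex x N m)) + / ((y - x m) ^ 2 * Pex x N m)))).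
    2:{ intros m Hm. rewrite Pex_last_lt by lia.
        assert (Pex x N m <> 0) by (apply Pex_nz; auto; lia).
        specialize (Hx' m ltac:(lia)). specialize (Hy' m ltac:(lia)).
        field. repeat split; auto; lra. }
    rewrite sumR_scal, sumR_plus, sumR_scal, sumR_plus, sumR_scal, !PF, IHN by auto.
    assert (prodR 0 N (fun l => y - x l) <> 0) by (apply Q_nz; auto).
    assert (prodR 0 N (fun l => x (S N) - x l) <> 0) by (apply Q_nz; auto).
    field. repeat split; auto; lra.
Qed.


Lemma is_RInt_expK c K x : c <> 0 ->
  is_RInt (fun t => exp (c * t) * K) 0 x ((exp (c * x) - 1) / c * K).
Proof.
  intros Hc.
  replace ((exp (c * x) - 1) / c * K) with
    (minus ((fun t => exp (c * t) / c * K) x) ((fun t => exp (c * t) / c * K) 0)).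
  2:{ unfold minus, plus, opp; simpl. rewrite Rmult_0_r, exp_0. field. auto. }
  apply (is_RInt_derive (fun t => exp (c * t) / c * K) (fun t => exp (c * t) * K)).
  - intros t _. auto_derive. auto. field. auto.
  - intros t _. apply (@ex_derive_continuous R_AbsRing R_NormedModule (fun t => exp (c * t) * K)). auto_derive. auto.
Qed.

Lemma is_RInt_sumR N (h : nat -> R -> R) (I : nat -> R) a b :
  (forall m, (m <= N)%nat -> is_RInt (h m) a b (I m)) ->
  is_RInt (fun t => sumR 0 N (fun m => h m t)) a b (sumR 0 N I).
Proof.
  induction N; intros H.
  - rewrite sumR_one. apply (is_RInt_ext (h 0%nat)). intros t _. rewrite sumR_one. reflexivity. apply H; lia.
  - rewrite sumR_last by lia. apply (is_RInt_ext (fun t => sumR 0 N (fun m => h m t) + h (S N) t)). intros t _. rewrite sumR_last by lia. reflexivity.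
    apply (is_RInt_plus (fun t => sumR 0 N (fun m => h m t)) (h (S N))). apply IHN; intros; apply H; lia. apply H; lia.
Qed.


Fixpoint Nc (u : nat -> R) (k i : nat) (x : R) : R :=
  match k with
  | O => 1
  | S k' => RInt (fun t => exp ((u i - u (S i)) * t) * Nc u k' (S i) t) 0 x
  end.

Definition CF (u : nat -> R) (k i : nat) (x : R) : R :=
  sumR 0 k (fun m => exp ((u i - u (i + m)%nat) * x) / Pex (fun l => - u (i + l)%nat) k m).

Lemma Pex_ext x x' k m : (forall l, (l <= k)%nat -> x l = x' l) -> (m <= k)%nat -> Pex x k m = Pex x' k m.
Proof. intros H Hm. unfold Pex. apply prodR_ext. intros j Hj. destruct (Nat.eq_dec j m); auto.
  rewrite !H by lia. reflexivity. Qed.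

Lemma Pex_first x k : Pex x (S k) 0 = prodR 0 k (fun l => x 0%nat - x (S l)).
Proof. unfold Pex. rewrite prodR_first by lia. destruct (Nat.eq_dec 0 0); [|lia].
  rewrite Rmult_1_l. replace 1%nat with (0 + 1)%nat by lia. replace (S k) with (k + 1)%nat by lia.
  rewrite prodR_shift. apply prodR_ext. intros j Hj. destruct (Nat.eq_dec (j + 1) 0). lia.
  f_equal. f_equal. lia. Qed.

Lemma Pex_first_S x k j : Pex x (S k) (S j) = (x (S j) - x 0%nat) * Pex (fun l => x (S l)) k j.
Proof. unfold Pex. rewrite prodR_first by lia. destruct (Nat.eq_dec 0 (S j)); [lia|].
  f_equal. replace 1%nat with (0 + 1)%nat by lia. replace (S k) with (k + 1)%nat by lia.
  rewrite prodR_shift. apply prodR_ext. intros l Hl.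
  replace (l + 1)%nat with (S l) by lia.
  destruct (Nat.eq_dec (S l) (S j)), (Nat.eq_dec l j); auto; lia. Qed.

Lemma sumR_first0 f k : sumR 0 (S k) f = f 0%nat + sumR 0 k (fun j => f (S j)).
Proof. rewrite sumR_first by lia. replace 1%nat with (0 + 1)%nat by lia.
  replace (S k) with (k + 1)%nat by lia. rewrite sumR_shift. f_equal. apply sumR_ext.
  intros; f_equal; lia. Qed.

Lemma step u k i : injN (fun l => - u (i + l)%nat) (S k) ->
  (forall x, Nc u k (S i) x = CF u k (S i) x) ->
  forall x, is_RInt (fun t => exp ((u i - u (S i)) * t) * Nc u k (S i) t) 0 x (CF u (S k) i x).
Proof.
  intros Hd IH x.
  set (xs := fun l => - u (S i + l)%nat).
  assert (Hxs : injN xs k).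
  { intros a b Ha Hb Hab. unfold xs. replace (S i + a)%nat with (i + S a)%nat by lia.
    replace (S i + b)%nat with (i + S b)%nat by lia. apply Hd; lia. }
  assert (Hc : forall m, (m <= k)%nat -> u i - u (S i + m)%nat <> 0).
  { intros m Hm E. apply (Hd 0%nat (S m)); try lia. rewrite Nat.add_0_r.
    replace (i + S m)%nat with (S i + m)%nat by lia. lra. }
  apply (is_RInt_ext (fun t => sumR 0 k (fun m => exp ((u i - u (S i + m)%nat) * t) * / Pex xs k m))).
  { intros t _. rewrite IH. unfold CF. rewrite <- sumR_scal. apply sumR_ext. intros m Hm.
    replace ((u i - u (S i + m)%nat) * t) with ((u i - u (S i)) * t + (u (S i) - u (S i + m)%nat) * t) by ring.
    rewrite exp_plus. unfold Rdiv, xs. ring. }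
  replace (CF u (S k) i x) with (sumR 0 k (fun m => (exp ((u i - u (S i + m)%nat) * x) - 1) / (u i - u (S i + m)%nat) * / Pex xs k m)).
  { apply is_RInt_sumR. intros m Hm. apply is_RInt_expK. auto. }
  unfold CF. rewrite sumR_first0.
  rewrite Pex_first.
  rewrite (sumR_ext _ (fun m => exp ((u i - u (S i + m)%nat) * x) / (u i - u (S i + m)%nat) / Pex xs k m
        + / ((- u i - xs m) * Pex xs k m))).
  2:{ intros m Hm. unfold xs. assert (Pex xs k m <> 0) by (apply Pex_nz; [auto|lia]).
      specialize (Hc m ltac:(lia)). fold xs. field. split; auto. lra. }
  rewrite sumR_plus, PF; auto.
  2:{ intros a Ha E. apply (Hd 0%nat (S a)); try lia. unfold xs in E. rewrite Nat.add_0_r.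
      replace (i + S a)%nat with (S i + a)%nat by lia. lra. }
  rewrite Rplus_comm. f_equal.
  - rewrite Nat.add_0_r, Rminus_diag, Rmult_0_l, exp_0. unfold Rdiv. rewrite Rmult_1_l. f_equal.
    apply prodR_ext. intros l Hl. unfold xs.
    replace (i + S l)%nat with (S i + l)%nat by lia. ring.
  - apply sumR_ext. intros m Hm. replace (i + S m)%nat with (S i + m)%nat by lia.
    rewrite Pex_first_S.
    rewrite (Pex_ext (fun l => - u (i + S l)%nat) xs) by (try lia; intros l Hl; unfold xs; do 2 f_equal; lia).
    rewrite Nat.add_0_r. replace (i + S m)%nat with (S i + m)%nat by lia.
    assert (Pex xs k m <> 0) by (apply Pex_nz; [auto|lia]). specialize (Hc m ltac:(lia)).
    field. split; auto. lra.
Qed.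

Lemma closedF u k : forall i, injN (fun l => - u (i + l)%nat) k -> forall x, Nc u k i x = CF u k i x.
Proof.
  induction k; intros i Hd x.
  - simpl. unfold CF. rewrite sumR_one. unfold Pex. rewrite prodR_one.
    destruct (Nat.eq_dec 0 0); [|lia]. rewrite Nat.add_0_r, Rminus_diag, Rmult_0_l, exp_0. field.
  - simpl. apply is_RInt_unique. apply step; auto. apply IHk.
    intros a b Ha Hb Hab. replace (S i + a)%nat with (i + S a)%nat by lia.
    replace (S i + b)%nat with (i + S b)%nat by lia. apply Hd; lia.
Qed.


Definition uu (n : nat) (w : nat -> R) (j : nat) : R := if Nat.ltb j n then sumR 1 j w else 0.
Definition TT (u : nat -> R) (acc : list R) := sumR 1 (length acc) (fun j => (u (j - 1)%nat - u j) * bvar acc j).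

Lemma uu_lt n w j : (j < n)%nat -> uu n w j = sumR 1 j w.
Proof. intros. unfold uu. destruct (Nat.ltb_spec j n); [reflexivity|lia]. Qed.
Lemma uu_n n w : uu n w n = 0.
Proof. unfold uu. destruct (Nat.ltb_spec n n); [lia|reflexivity]. Qed.

Lemma sw w a b : (a <= b)%nat -> sumR (S a) b w = sumR 1 b w - sumR 1 a w.
Proof. intros. rewrite (sumR_split w 1 a b) by lia. ring. Qed.

Lemma TT_app u acc x : TT u (acc ++ x :: nil) = TT u acc + (u (length acc) - u (S (length acc))) * x.
Proof.
  unfold TT. rewrite length_app. simpl length.
  replace (length acc + 1)%nat with (S (length acc)) by lia. rewrite sumR_last by lia. f_equal.
  - apply sumR_ext. intros j Hj. unfold bvar. rewrite app_nth1 by lia. reflexivity.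
  - unfold bvar. replace (S (length acc) - 1)%nat with (length acc) by lia.
    rewrite app_nth2 by lia. rewrite Nat.sub_diag. reflexivity.
Qed.

Lemma F_base n w acc : (2 <= n)%nat -> length acc = n ->
  exp (- sumR 1 (n - 1) (fun j => bvar acc j * w j) + bvar acc n * sumR 1 (n - 1) w)
  = exp (TT (uu n w) acc).
Proof.
  intros Hn Hl. f_equal. unfold TT. rewrite Hl. destruct n as [|n']; [lia|].
  replace (S n' - 1)%nat with n' by lia. rewrite sumR_last by lia.
  rewrite uu_n, uu_lt by lia.
  replace (S n' - 1)%nat with n' by lia.
  rewrite (sumR_ext (fun j => (uu (S n') w (j - 1) - uu (S n') w j) * bvar acc j) (fun j => (-1) * (bvar acc j * w j))).
  { rewrite sumR_scal. ring. }
  intros j Hj. destruct j as [|j']; [lia|]. replace (S j' - 1)%nat with j' by lia.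
  rewrite !uu_lt by lia. rewrite sumR_last by lia. ring.
Qed.

Lemma myRInt_scal (g : R -> R) a b c : ex_RInt g a b -> RInt (fun x => c * g x) a b = c * RInt g a b.
Proof. intros [I HI]. rewrite (is_RInt_unique g a b I HI). apply is_RInt_unique.
  apply (is_RInt_scal _ _ _ c) in HI. exact HI. Qed.

Lemma link n w (Hn : (2 <= n)%nat)
  (Hint : forall i x, (i < n)%nat -> ex_RInt (fun t => exp ((uu n w i - uu n w (S i)) * t) * Nc (uu n w) (n - S i) (S i) t) 0 x) :
  forall k acc b, (length acc + k = n)%nat ->
  nest k (fun bs => exp (- sumR 1 (n - 1) (fun j => bvar bs j * w j)
                         + bvar bs n * sumR 1 (n - 1) w)) b acc
  = exp (TT (uu n w) acc) * Nc (uu n w) k (length acc) b.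
Proof.
  induction k; intros acc b Hl.
  - cbn [nest Nc]. rewrite F_base by lia. ring.
  - cbn [nest Nc].
    rewrite (RInt_ext _ (fun x => exp (TT (uu n w) acc) * (exp ((uu n w (length acc) - uu n w (S (length acc))) * x) * Nc (uu n w) k (S (length acc)) x))).
    2:{ intros x _. rewrite IHk by (rewrite length_app; simpl; lia). rewrite TT_app, length_app. simpl length.
        replace (length acc + 1)%nat with (S (length acc)) by lia. rewrite exp_plus. apply Rmult_assoc. }
    apply myRInt_scal.
    pose proof (Hint (length acc) b ltac:(lia)) as HH.
    replace (n - S (length acc))%nat with k in HH by lia. exact HH.
Qed.


Lemma Hinj_of n w
  (Hw : forall m p : nat, (1 <= m)%nat -> (m <= p)%nat -> (p <= n - 1)%nat -> sumR m p w <> 0) :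
  forall a b, (1 <= a <= n)%nat -> (1 <= b <= n)%nat -> a <> b -> uu n w a <> uu n w b.
Proof.
  assert (H : forall a b, (1 <= a)%nat -> (a < b)%nat -> (b <= n)%nat -> uu n w a <> uu n w b).
  { intros a b Ha Hab Hb. rewrite (uu_lt n w a) by lia.
    destruct (Nat.eq_dec b n).
    - subst b. rewrite uu_n. apply Hw; lia.
    - rewrite uu_lt by lia. intro E. apply (Hw (S a) b); try lia. rewrite sw by lia. lra. }
  intros a b Ha Hb Hab. destruct (Nat.lt_ge_cases a b).
  - apply H; lia.
  - intro E. apply (H b a); try lia. auto.
Qed.

Lemma inj_shift n w i k : (forall a b, (1 <= a <= n)%nat -> (1 <= b <= n)%nat -> a <> b -> uu n w a <> uu n w b) ->
  (1 <= i)%nat -> (i + k <= n)%nat -> injN (fun l => - uu n w (i + l)%nat) k.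
Proof. intros H Hi Hk a b Ha Hb Hab E. apply (H (i + a)%nat (i + b)%nat); try lia. lra. Qed.

Lemma my_const a b K : is_RInt (fun _ => K) a b ((b - a) * K).
Proof. exact (is_RInt_const (V:=R_NormedModule) a b K). Qed.

Lemma top N w
  (Hinj : forall a b, (1 <= a <= S (S N))%nat -> (1 <= b <= S (S N))%nat -> a <> b -> uu (S (S N)) w a <> uu (S (S N)) w b)
  x :
  let u := uu (S (S N)) w in
  is_RInt (fun t => exp ((u 0%nat - u 1%nat) * t) * Nc u (S N) 1 t) 0 x
    (sumR 0 N (fun m => (exp ((u 0%nat - u (1 + m)%nat) * x) - 1) / (u 0%nat - u (1 + m)%nat)
          * / (Pex (fun l => - u (1 + l)%nat) N m * (- u (1 + m)%nat - - u (1 + S N)%nat)))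
     + x * / prodR 0 N (fun l => - u (1 + S N)%nat - - u (1 + l)%nat)).
Proof.
  intros u.
  assert (H0 : u 0%nat = 0) by (unfold u; rewrite uu_lt by lia; apply sumR_empty; lia).
  assert (Hn0 : u (1 + S N)%nat = 0) by (unfold u; replace (1 + S N)%nat with (S (S N)) by lia; apply uu_n).
  assert (Hc : forall m, (m <= N)%nat -> u 0%nat - u (1 + m)%nat <> 0).
  { intros m Hm. rewrite H0. intro E. apply (Hinj (1 + m)%nat (S (S N))); try lia.
    fold u. replace (u (S (S N))) with 0 by (rewrite <- Hn0; f_equal; lia). lra. }
  assert (Hi : injN (fun l => - u (1 + l)%nat) (S N)) by (apply inj_shift; auto; lia).
  apply (is_RInt_ext (fun t => sumR 0 N (fun m => exp ((u 0%nat - u (1 + m)%nat) * t) *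
          / (Pex (fun l => - u (1 + l)%nat) N m * (- u (1 + m)%nat - - u (1 + S N)%nat)))
     + / prodR 0 N (fun l => - u (1 + S N)%nat - - u (1 + l)%nat))).
  { intros t _. rewrite (closedF u (S N) 1%nat Hi t). unfold CF. rewrite sumR_last by lia.
    rewrite Rmult_plus_distr_l. f_equal.
    - rewrite <- sumR_scal. apply sumR_ext. intros m Hm. rewrite Pex_last_lt by lia.
      replace ((u 0%nat - u (1 + m)%nat) * t) with ((u 0%nat - u 1%nat) * t + (u 1%nat - u (1 + m)%nat) * t) by ring.
      rewrite exp_plus. unfold Rdiv. ring.
    - rewrite Pex_last_eq. rewrite <- (Rmult_1_l (/ prodR 0 N _)). unfold Rdiv. rewrite <- Rmult_assoc.
      f_equal. rewrite <- exp_plus. rewrite H0, Hn0. replace ((0 - u 1%nat) * t + (u 1%nat - 0) * t) with 0 by ring.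
      symmetry; apply exp_0. }
  apply (is_RInt_plus (fun t => sumR 0 N (fun m => exp ((u 0%nat - u (1 + m)%nat) * t) *
          / (Pex (fun l => - u (1 + l)%nat) N m * (- u (1 + m)%nat - - u (1 + S N)%nat))))
     (fun _ => / prodR 0 N (fun l => - u (1 + S N)%nat - - u (1 + l)%nat))).
  - apply is_RInt_sumR. intros m Hm. apply is_RInt_expK. apply Hc; auto.
  - replace (x * / prodR 0 N (fun l => - u (1 + S N)%nat - - u (1 + l)%nat)) with
      ((x - 0) * (/ prodR 0 N (fun l => - u (1 + S N)%nat - - u (1 + l)%nat))) by ring.
    apply my_const.
Qed.


Lemma sumR_shift1 f N : sumR 1 (S N) f = sumR 0 N (fun m => f (S m)).
Proof. transitivity (sumR (0 + 1) (N + 1) f). replace (N + 1)%nat with (S N) by lia. reflexivity.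
  rewrite sumR_shift. apply sumR_ext. intros j Hj. f_equal. lia. Qed.
Lemma prodR_shift1 f N : prodR 1 (S N) f = prodR 0 N (fun m => f (S m)).
Proof. transitivity (prodR (0 + 1) (N + 1) f). replace (N + 1)%nat with (S N) by lia. reflexivity.
  rewrite prodR_shift. apply prodR_ext. intros j Hj. f_equal. lia. Qed.

Lemma Pex_dec w N m : (m <= N)%nat ->
  Pex (fun l => - sumR 1 (S l) w) N m =
  (-1) ^ m * prodR 2 (S m) (fun r => sumR r (S m) w) * prodR (S m + 1) (S N) (fun k => sumR (S m + 1) k w).
Proof.
  intros Hm. unfold Pex. rewrite (prodR_split _ 0 m N) by lia. f_equal.
  - destruct m as [|m'].
    + rewrite prodR_one, prodR_empty by lia. destruct (Nat.eq_dec 0 0); [|lia]. simpl; ring.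
    + rewrite prodR_last by lia. destruct (Nat.eq_dec (S m') (S m')); [|lia]. rewrite Rmult_1_r.
      rewrite (prodR_ext _ (fun l => - sumR (l + 2) (S (S m')) w)).
      * rewrite prodR_opp. replace (S m' - 0)%nat with (S m') by lia. f_equal.
        transitivity (prodR (0 + 2) (m' + 2) (fun r => sumR r (S (S m')) w)).
        rewrite prodR_shift. reflexivity.
        replace (0 + 2)%nat with 2%nat by lia. replace (m' + 2)%nat with (S (S m')) by lia. reflexivity.
      * intros j Hj. destruct (Nat.eq_dec j (S m')); [lia|].
        replace (j + 2)%nat with (S (S j)) by lia. rewrite (sw w (S j) (S (S m'))) by lia. ring.
  - replace (S N) with (N + 1)%nat by lia. rewrite prodR_shift. apply prodR_ext. intros j Hj.
    destruct (Nat.eq_dec j m); [lia|].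
    replace (S m + 1)%nat with (S (S m)) by lia. replace (j + 1)%nat with (S j) by lia.
    rewrite (sw w (S m) (S j)) by lia. ring.
Qed.

Lemma pm1 m : (-1) ^ m = 1 \/ (-1) ^ m = -1.
Proof. induction m; simpl. auto. destruct IHm as [H|H]; rewrite H; [right|left]; ring. Qed.


Theorem mainTheorem4 (n : nat) (beta : R) (w : nat -> R)
  (Hn : (2 <= n)%nat)
  (Hw : forall m p : nat, (1 <= m)%nat -> (m <= p)%nat -> (p <= n - 1)%nat ->
          sumR m p w <> 0) :
  nest n (fun bs => exp (- sumR 1 (n - 1) (fun j => bvar bs j * w j)
                         + bvar bs n * sumR 1 (n - 1) w)) beta nil
  = / prodR 1 (n - 1) (fun k => sumR 1 k w)
      * (beta - sumR 1 (n - 1) (fun k => / sumR 1 k w))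
    - sumR 1 (n - 1) (fun p =>
        (-1) ^ p * exp (- beta * sumR 1 p w)
        / (prodR 2 p (fun m => sumR m p w) * (sumR 1 p w) ^ 2
           * prodR (p + 1) (n - 1) (fun k => sumR (p + 1) k w))).
Proof.
  destruct n as [|[|N]]; try lia.
  assert (Hinj := Hinj_of _ _ Hw).
  assert (Hint : forall i x, (i < S (S N))%nat -> ex_RInt (fun t => exp ((uu (S (S N)) w i - uu (S (S N)) w (S i)) * t) * Nc (uu (S (S N)) w) (S (S N) - S i) (S i) t) 0 x).
  { intros i x Hi. destruct i as [|i'].
    - replace (S (S N) - 1)%nat with (S N) by lia. eexists. apply (top N w Hinj x).
    - eexists. apply step.
      + apply inj_shift; auto; lia.
      + intros y. apply closedF. apply inj_shift; auto; lia. }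
  rewrite (link (S (S N)) w ltac:(lia) Hint (S (S N)) nil beta ltac:(simpl; lia)).
  unfold TT. simpl length. rewrite sumR_empty by lia. rewrite exp_0, Rmult_1_l.
  pose proof (top N w Hinj beta) as HT. cbv zeta in HT.
  match type of HT with is_RInt _ _ _ ?V =>
    replace (Nc (uu (S (S N)) w) (S (S N)) 0 beta) with V by (symmetry; exact (is_RInt_unique _ _ _ _ HT)) end.
  clear HT Hint.
  replace (S (S N) - 1)%nat with (S N) by lia.
  rewrite prodR_shift1, !sumR_shift1. cbv beta.
  set (u := uu (S (S N)) w).
  assert (H0 : u 0%nat = 0) by (unfold u; rewrite uu_lt by lia; apply sumR_empty; lia).
  assert (Hn0 : u (1 + S N)%nat = 0) by (unfold u; replace (1 + S N)%nat with (S (S N)) by lia; apply uu_n).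
  assert (Hum : forall l, (l <= N)%nat -> u (1 + l)%nat = sumR 1 (S l) w) by (intros; unfold u; rewrite uu_lt by lia; reflexivity).
  assert (Hs : forall l, (l <= N)%nat -> sumR 1 (S l) w <> 0) by (intros; apply Hw; lia).
  assert (HiX : injN (fun l => - sumR 1 (S l) w) N).
  { intros a b Ha Hb Hab E. apply (Hinj (1 + a)%nat (1 + b)%nat); try lia. fold u. rewrite !Hum by lia. lra. }
  assert (HQ : prodR 0 N (fun l => sumR 1 (S l) w) <> 0) by (apply prodR_nz; intros; apply Hs; lia).
  rewrite Hn0, H0.
  rewrite (prodR_ext (fun l => -0 - - u (1 + l)%nat) (fun l => sumR 1 (S l) w)) by (intros; rewrite Hum by lia; ring).
  rewrite (sumR_ext (fun m => (exp ((0 - u (1 + m)%nat) * beta) - 1) / (0 - u (1 + m)%nat) * / (Pex (fun l => - u (1 + l)%nat) N m * (- u (1 + m)%nat - - 0)))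
     (fun m => (-1) * ((-1) ^ (S m) * exp (- beta * sumR 1 (S m) w) / (prodR 2 (S m) (fun r => sumR r (S m) w) * sumR 1 (S m) w ^ 2 * prodR (S m + 1) (S N) (fun k => sumR (S m + 1) k w)))
        + (-1) * / ((0 - - sumR 1 (S m) w) ^ 2 * Pex (fun l => - sumR 1 (S l) w) N m))).
  2:{ intros m Hm. rewrite Hum by lia.
      rewrite (Pex_ext _ (fun l => - sumR 1 (S l) w)) by (try lia; intros; rewrite Hum by lia; reflexivity).
      rewrite Pex_dec by lia.
      assert (HA : prodR 2 (S m) (fun r => sumR r (S m) w) <> 0) by (apply prodR_nz; intros; apply Hw; lia).
      assert (HB : prodR (S m + 1) (S N) (fun k => sumR (S m + 1) k w) <> 0) by (apply prodR_nz; intros; apply Hw; lia).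
      specialize (Hs m ltac:(lia)).
      change ((-1) ^ (S m)) with (-1 * (-1) ^ m).
      replace ((0 - sumR 1 (S m) w) * beta) with (- beta * sumR 1 (S m) w) by ring.
      destruct (pm1 m) as [E|E]; rewrite E; field; repeat split; auto. }
  rewrite sumR_plus, !sumR_scal, PF2; auto.
  2:{ intros a Ha. specialize (Hs a Ha). lra. }
  rewrite (prodR_ext (fun l => 0 - - sumR 1 (S l) w) (fun l => sumR 1 (S l) w)) by (intros; ring).
  rewrite (sumR_ext (fun l => / (0 - - sumR 1 (S l) w)) (fun l => / sumR 1 (S l) w)) by (intros; f_equal; ring).
  field. auto.
Qed.
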